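(* Let $Q\in\mathcal{Q}(n,d,m)$ and $\underline{\delta}\in\Omega_3(Q)$. Then $|\underline{\delta}|\leq m(d-n+1)$.
   Context: A quiver $Q$ is a finite oriented graph; for an arrow $a$, $a''$ is its tail and $a'$ its head. A path $a=a_1\cdots a_s$ ($a_i$ arrows) satisfies $a_i'=a_{i+1}''$; it is closed if $a_1''=a_s'$; $V(a)=\{a_1'',a_1',\dots,a_s'\}$, $A(a)=\{a_1,\dots,a_s\}$. A closed path is primitive if each vertex of $V(a)$ is the head of exactly one $a_i$. $m(Q)$ is the maximal degree of a primitive closed path; $Q$ is strongly connected if some closed path contains all vertices; $\mathcal{Q}(n,d,m)$ is the set of strongly connected quivers with $n$ vertices, $d$ arrows and $m(Q)=m$. The multidegree $\mathrm{mdeg}(a)\in\mathbb{N}^{\#A(Q)}$ of a path $a$ has $b$-component equal to the number of $i$ with $a_i=b$. For $\underline{\delta}\in\mathbb{N}^{\#A(Q)}$, $|\underline{\delta}|=\sum_b\delta_b$. $\Omega_0(Q)$ is the set of $\mathrm{mdeg}(h)$ for closed paths $h$ in $Q$ with $A(h)=A(Q)$. A path $a$ is $\underline{\delta}$-double if it is a primitive closed path and $\delta_{a_i}\geq2$ for all $i$. $\Omega_3(Q)$ is the set of $\underline{\delta}\in\Omega_0(Q)$ such that there is no $\underline{\delta}$-double path in $Q$. *)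

(* Defs.v *)
From mathcomp Require Import all_boot.
Set Implicit Arguments. Unset Strict Implicit. Unset Printing Implicit Defensive.

(* A quiver Q with n vertices ('I_n) and d arrows ('I_d), given by the tail
   map tl (b |-> b'') and the head map hd (b |-> b').  Multiple arrows and
   loops are allowed.  A path a = a_1 ... a_s (s >= 1) is the sequence
   [:: a_1; ...; a_s] of arrows. *)
Section Quiver.
Variables (n d : nat) (tl hd : 'I_d -> 'I_n).

Definition is_path (a : seq 'I_d) : bool :=
  if a is x :: s then path (fun b c => hd b == tl c) x s else false.

Definition is_closed_path (a : seq 'I_d) : bool :=
  if a is x :: s then path (fun b c => hd b == tl c) x s && (tl x == hd (last x s))
  else false.

Definition Vset (a : seq 'I_d) : {set 'I_n} :=
  if a is x :: s then tl x |: [set hd b | b in a] else set0.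

Definition Aset (a : seq 'I_d) : {set 'I_d} := [set b in a].

Definition primitive (a : seq 'I_d) : bool :=
  is_closed_path a && [forall v in Vset a, count (fun b => hd b == v) a == 1].

Definition mQ_is (m : nat) : Prop :=
  (exists a, primitive a /\ size a = m) /\
  (forall a, primitive a -> size a <= m).

Definition strongly_connected : Prop :=
  exists a, is_closed_path a /\ Vset a = [set: 'I_n].

(* Q \in Q(n,d,m) (n, d are built into the type of Q) *)
Definition in_Qndm (m : nat) : Prop := strongly_connected /\ mQ_is m.

Definition mdeg (a : seq 'I_d) : 'I_d -> nat := fun b => count_mem b a.

Definition weight (delta : 'I_d -> nat) : nat := \sum_(b : 'I_d) delta b.

Definition in_Omega0 (delta : 'I_d -> nat) : Prop :=
  exists h, [/\ is_closed_path h, Aset h = [set: 'I_d] & mdeg h =1 delta].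

Definition double_path (delta : 'I_d -> nat) (a : seq 'I_d) : bool :=
  primitive a && all (fun b => 2 <= delta b) a.

Definition in_Omega3 (delta : 'I_d -> nat) : Prop :=
  in_Omega0 delta /\ ~ (exists a, double_path delta a).
End Quiver.

(* Main.v *)
Require Import Defs.
From mathcomp Require Import all_boot all_algebra zify.
Import GRing.Theory.
Set Implicit Arguments. Unset Strict Implicit. Unset Printing Implicit Defensive.

Section Comb.
Variables (n d : nat) (tl hd : 'I_d -> 'I_n).
Definition ee := fun b c => hd b == tl c.

Lemma closedE a : is_closed_path tl hd a = (a != [::]) && cycle ee a.
Proof.
by case: a => [|x s] //=; rewrite rcons_path eq_sym.
Qed.

Lemma split_cycle x p y q : cycle ee (x :: p ++ y :: q) ->
  hd (last x p) = hd (last y q) ->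
  cycle ee (x :: p) /\ cycle ee (y :: q).
Proof.
rewrite /= rcons_cat cat_path /= rcons_path.
move=> /and4P[P1 E1 P2 E2] H.
rewrite !rcons_path P1 P2 /=; split=> //.
  by move: E2; rewrite /ee H.
by move: E1; rewrite /ee H.
Qed.

Lemma split_cycle' z p q : cycle ee (p ++ q) -> p != [::] -> q != [::] ->
  hd (last z p) = hd (last z q) -> cycle ee p /\ cycle ee q.
Proof. by case: p => [|x p] // ; case: q => [|y q] //= H _ _; apply: split_cycle. Qed.

Definition goodc (c : seq 'I_d) := (c != [::]) && cycle ee c && uniq (map hd c).

Lemma decomp a : cycle ee a -> exists cs : seq (seq 'I_d), all goodc cs /\
  forall b, count_mem b a = \sum_(c <- cs) count_mem b c.
Proof.
elim: {a}(size a).+1 {-2}a (ltnSn (size a)) => // N IH a Ha Hc.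
case: (boolP (uniq (map hd a))) => U.
  case: a Ha Hc U => [|x s] Ha Hc U.
    by exists [::]; split => // b; rewrite big_nil.
  exists [:: x :: s]; split; first by rewrite /= /goodc Hc U.
  by move=> b; rewrite big_seq1.
case: a Ha Hc U => [|x s] //; set a := x :: s => Ha Hc U.
have [i [j [lij lj E]]] := uniqPn (hd x) U.
rewrite size_map in lj.
have li : i < size a by apply: ltn_trans lij lj.
rewrite !(nth_map x) // in E.
set A := take i.+1 a; set C := take (j - i) (drop i.+1 a); set D := drop (j - i) (drop i.+1 a).
have Ea : a = A ++ C ++ D by rewrite /C /D !cat_take_drop.
have EA : A = rcons (take i a) (nth x a i) by rewrite /A (take_nth x).
have EC : C = rcons (take (j - i).-1 (drop i.+1 a)) (nth x a j).
  rewrite /C -{1}(prednK (_ : 0 < j - i)) ?subn_gt0 //.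
  rewrite (take_nth x) ?size_drop; last by rewrite -subn_gt0; move: lij lj; lia.
  by rewrite nth_drop; congr rcons; congr nth; move: lij; lia.
have HcC : cycle ee (C ++ (D ++ A)).
  have -> : C ++ (D ++ A) = rot i.+1 a by rewrite catA /rot /C /D cat_take_drop.
  by rewrite rot_cycle.
have c1 := @split_cycle' x _ _ HcC.
have nA : A != [::] by rewrite EA; case: (take i a).
have nC : C != [::] by rewrite EC; case: (take _ _).
have nDA : D ++ A != [::] by move: nA; rewrite -!size_eq0 size_cat; lia.
have := c1 nC nDA.
rewrite EC last_rcons last_cat EA last_rcons -E -EA -EC => /(_ erefl) [cC cDA].
have sz : size a = size A + size C + size D by rewrite {1}Ea !size_cat addnA.
have sA : 0 < size A by rewrite lt0n size_eq0.
have sC : 0 < size C by rewrite lt0n size_eq0.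
have [cs1 [g1 E1]] : exists cs : seq (seq 'I_d), all goodc cs /\
  forall b, count_mem b C = \sum_(c <- cs) count_mem b c.
  by apply: IH cC; move: Ha; lia.
have [cs2 [g2 E2]] : exists cs : seq (seq 'I_d), all goodc cs /\
  forall b, count_mem b (D ++ A) = \sum_(c <- cs) count_mem b c.
  by apply: IH cDA; move: Ha; rewrite size_cat; lia.
exists (cs1 ++ cs2); split; first by rewrite all_cat g1 g2.
move=> b; rewrite big_cat -E1 -E2 {1}Ea !count_cat /=; lia.
Qed.

Lemma cycle_last x s : cycle ee (x :: s) -> tl x = hd (last x s).
Proof. by rewrite /= rcons_path => /andP[_ /eqP]. Qed.

Lemma good_prim c : goodc c -> primitive tl hd c.
Proof.
case/andP=> /andP[nc cc] U; rewrite /primitive closedE nc cc /=.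
apply/forall_inP => v Hv.
have Hm : v \in map hd c.
  case: c nc cc U Hv => [|x s] // _ cc _ Hv; move: Hv; rewrite /Vset in_setU1 => /orP[/eqP->|].
    by rewrite (cycle_last cc); apply: map_f; exact: mem_last.
  by case/imsetP => b bin ->; apply: map_f.
have H1 : count_mem v (map hd c) = 1 by rewrite count_uniq_mem ?Hm.
rewrite count_map in H1; apply/eqP; rewrite -H1.
by apply/eq_count => b; rewrite /= eq_sym.
Qed.

Lemma cycle_count c v : cycle ee c ->
  count (fun b => hd b == v) c = count (fun b => tl b == v) c.
Proof.
case: c => [|x s] // cc.
have E1 : map tl (x :: s) = tl x :: map hd (belast x s).
  move: cc; rewrite /= rcons_path => /andP[P _]; congr cons.
  elim: s x P => [|y s IH] x //= /andP[/eqP -> P]; congr cons; exact: IH.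
have E2 : map hd (x :: s) = rcons (map hd (belast x s)) (tl x).
  by rewrite (cycle_last cc) -map_rcons -lastI.
rewrite -(count_map hd (pred1 v)) -(count_map tl (pred1 v)) E1 E2.
by rewrite -cats1 count_cat /= addn0 addnC.
Qed.

Lemma path_const (T : Type) (f : 'I_n -> T) x s : path ee x s -> (forall b, f (hd b) = f (tl b)) ->
  forall b, b \in x :: s -> f (hd b) = f (tl x).
Proof.
move=> P Hf; elim: s x P => [|y s IH] x /=.
  by move=> _ b; rewrite inE => /eqP ->.
case/andP=> /eqP E P b; rewrite inE => /orP[/eqP -> // |] /(IH _ P) ->.
by rewrite -E Hf.
Qed.
End Comb.

Lemma sum_count d (c : seq 'I_d) (P : pred 'I_d) :
  \sum_(b : 'I_d) count_mem b c * P b = count P c.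
Proof.
elim: c => [|x c IH] /=; first by rewrite big1.
transitivity (\sum_(b : 'I_d) ((x == b) * P b + count_mem b c * P b)).
  by apply: eq_bigr => b _; rewrite mulnDl.
rewrite big_split /= IH; congr (_ + _).
rewrite (bigD1 x) //= eqxx mul1n big1 ?addn0 // => b nb.
by rewrite eq_sym (negbTE nb).
Qed.


Section LA.
Variables (n d : nat) (tl hd : 'I_d -> 'I_n).
Local Open Scope ring_scope.
Definition Minc : 'M[rat]_(d,n) := \matrix_(b, v) ((hd b == v)%:R - (tl b == v)%:R).

Lemma sum_countR (c : seq 'I_d) (P : pred 'I_d) :
  \sum_b (count_mem b c)%:R * (P b)%:R = (count P c)%:R :> rat.
Proof. by rewrite -(sum_count c P) natr_sum; apply: eq_bigr => b _; rewrite natrM. Qed.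

Lemma cyc_ker (c : seq 'I_d) : cycle (ee tl hd) c ->
  forall v, \sum_b (count_mem b c)%:R * Minc b v = 0.
Proof.
move=> cc v.
under eq_bigr do rewrite mxE mulrBr.
rewrite sumrB (sum_countR c (fun b => hd b == v)) (sum_countR c (fun b => tl b == v)).
by rewrite (cycle_count v cc) subrr.
Qed.

Lemma sumdelta (f : 'I_n -> rat) a : \sum_v f v * (a == v)%:R = f a.
Proof.
rewrite (bigD1 a) //= eqxx mulr1 big1 ?addr0 // => v nv.
by rewrite eq_sym (negbTE nv) mulr0.
Qed.

Lemma ker_const (x : 'rV[rat]_n) : x *m Minc^T = 0 -> forall b, x 0 (hd b) = x 0 (tl b).
Proof.
move=> /matrixP H b; have := H 0 b; rewrite !mxE.
under eq_bigr do rewrite !mxE mulrBr.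
by rewrite sumrB !sumdelta => /eqP; rewrite subr_eq0 => /eqP.
Qed.

Lemma rank_inc : strongly_connected tl hd -> (n - \rank Minc <= 1)%N.
Proof.
case=> -[|x s] [ca Va] //.
rewrite -mxrank_tr -mxrank_ker.
apply: leq_trans (rank_leq_row (const_mx 1 : 'rV[rat]_n)).
apply: mxrankS; apply/row_subP => i.
set r := row i _.
have Hr : r *m Minc^T = 0 by apply/sub_kermxP; rewrite row_sub.
clearbody r.
have -> : r = r 0 (tl x) *: const_mx 1.
  apply/rowP => v; rewrite !mxE mulr1.
  have : v \in Vset tl hd (x :: s) by rewrite Va inE.
  rewrite /Vset in_setU1 => /orP[/eqP -> // | /imsetP [b bin ->]].
  move: ca => /= /andP[P _].
  exact: (path_const (f := fun v => r 0 v) P (ker_const Hr)).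
by apply: scalemx_sub; exact: submx_refl.
Qed.

Lemma count_bound k (V : 'M[rat]_(k,d)) : V *m Minc = 0 -> row_free V ->
  (k <= d - \rank Minc)%N.
Proof. by move=> H fr; rewrite -(eqP fr) -mxrank_ker; apply: mxrankS; apply/sub_kermxP. Qed.
End LA.

Theorem lemma3p4 (n d m : nat) (tl hd : 'I_d -> 'I_n) (delta : 'I_d -> nat) :
  in_Qndm tl hd m -> in_Omega3 tl hd delta ->
  weight delta <= m * (d - n + 1).
Proof.
case=> SC [_ mmax] [[h [ch _ mh]] nd].
move: ch; rewrite closedE => /andP[_ ch].
have [cs [g Ec]] := decomp ch.
set k := size cs.
pose C := fun i : 'I_k => nth [::] cs i.
have gi : forall i : 'I_k, goodc tl hd (C i) by move=> i; apply: (allP g); apply: mem_nth.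
have Hs : forall i : 'I_k, exists b : 'I_d, forall j : 'I_k, count_mem b (C j) = (i == j).
  move=> i.
  have : ~~ all (fun b => 2 <= delta b) (C i).
    by apply/negP => Ha; apply: nd; exists (C i); rewrite /double_path good_prim.
  case/allPn => b bin; rewrite -ltnNge => db.
  exists b.
  have E : \sum_(j < k) count_mem b (C j) = delta b.
    by rewrite -mh /mdeg Ec (big_nth [::]) big_mkord.
  move: E; rewrite (bigD1 i) //= => E.
  have ci : 0 < count_mem b (C i) by rewrite -has_count has_pred1.
  have r0 : \sum_(j < k | j != i) count_mem b (C j) == 0.
    by rewrite -(addKn (count_mem b (C i)) (\sum_(j < k | j != i) count_mem b (C j))) E; apply/eqP; lia.
  move=> j; case: (eqVneq i j) => [<-| ij]; first by apply/eqP; rewrite eqn_leq ci andbT -ltnS (leq_trans _ db) // ltnS -E leq_addr.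
  move: r0; rewrite sum_nat_eq0 => /forall_inP /(_ j); rewrite eq_sym ij => /(_ isT) /eqP ->.
  done.
have [s Hs'] := fin_all_exists Hs.
pose V : 'M[rat]_(k,d) := (\matrix_(i, b) (count_mem b (C i))%:R)%R.
have HV : (V *m Minc tl hd = 0)%R.
  apply/matrixP => i v; rewrite !mxE.
  rewrite (eq_bigr (fun b => (count_mem b (C i))%:R * Minc tl hd b v)%R).
    by apply: cyc_ker; case/andP: (gi i) => /andP[_ ?] _.
  by move=> j _; rewrite [V i j]mxE.
have fr : row_free V.
  apply/row_freeP; exists (\matrix_(b, j) (b == s j)%:R)%R.
  apply/matrixP => i j; rewrite !mxE.
  rewrite (bigD1 (s j)) //= !mxE eqxx GRing.mulr1 big1 ?GRing.addr0.
    by rewrite Hs' eq_sym.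
  by move=> b nb; rewrite !mxE (negbTE nb) GRing.mulr0.
have k_le := count_bound HV fr.
have rk := rank_inc SC.
have wt : weight delta <= k * m.
  have -> : weight delta = \sum_(c <- cs) size c.
    rewrite /weight (eq_bigr (fun b => \sum_(c <- cs) count_mem b c)); last first.
      by move=> b _; rewrite -(mh b) /mdeg Ec.
    rewrite exchange_big /=; apply: eq_bigr => c _.
    by rewrite -(count_predT c) -(sum_count c predT); apply: eq_bigr => b _; rewrite muln1.
  apply: leq_trans (_ : \sum_(c <- cs) m <= _).
    rewrite big_seq [X in _ <= X]big_seq; apply: leq_sum => c cin.
    by apply: mmax; apply: good_prim; exact: (allP g).
  by rewrite big_const_seq count_predT iter_addn_0 mulnC.
apply: leq_trans wt _; rewrite mulnC leq_mul2l; apply/orP; right.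
move: k_le rk; lia.
Qed.
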